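(* Let $m,n\in\mathbb{N}$, $R>0$ and $\varepsilon\in\mathbb{R}$ with $|\varepsilon|\ll_{m,n}R^{-1}$. Let $\xi:=(1+\varepsilon u)(1-\varepsilon v)$ and define $\bar\Phi:\mathfrak{D}\cap\{r<R\}\to\mathfrak{D}$ in null coordinates by \[ \bar\Phi(u,v,\omega_x,\omega_t):=\big(u(1+\varepsilon u)^{-1},\ v(1-\varepsilon v)^{-1},\ \omega_x,\ \omega_t\big). \] Then $\tau\circ\bar\Phi=\xi^{-1}\tau$, $f\circ\bar\Phi=\xi^{-1}f$, $\bar\rho\circ\bar\Phi=\xi^{-1}r$, and $\bar\Phi$ is a conformal isometry between $\mathfrak{D}\cap\{r<R\}$ and an open subset of $\mathfrak{D}$; specifically, the pull-back satisfies $\bar\Phi^*\bar g=\xi^{-2}g$ on $\mathfrak{D}\cap\{r<R\}$.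
   Context: On $\mathbb{R}^{m+n}$ with Cartesian coordinates $t\in\mathbb{R}^m$, $x\in\mathbb{R}^n$: $g=-\sum dt_i^2+\sum dx_j^2$, $r=|x|$, $\tau=|t|$, $u=\frac12(\tau-r)$, $v=\frac12(\tau+r)$, $f=-uv=\frac14(|x|^2-|t|^2)$, $\mathfrak{D}=\{f>0\}$; null coordinates $(u,v,\omega_x,\omega_t)$ with $\omega_x=x/|x|\in\mathbb{S}^{n-1}$, $\omega_t=t/|t|\in\mathbb{S}^{m-1}$, in which $g=-4\,du\,dv+r^2\mathring\gamma_{\mathbb{S}^{n-1}}-\tau^2\mathring\gamma_{\mathbb{S}^{m-1}}$. The warped radius is $\bar\rho=r+2\varepsilon f$ and the $\varepsilon$-warped metric is $\bar g=-4\,du\,dv+\bar\rho^2\mathring\gamma_{\mathbb{S}^{n-1}}-\tau^2\mathring\gamma_{\mathbb{S}^{m-1}}$. The notation $|\varepsilon|\ll_{m,n}R^{-1}$ means $|\varepsilon|\le cR^{-1}$ for a sufficiently small constant $c$ depending on $m,n$. *)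

(* Defs.v *)
From HB Require Import structures.
From mathcomp Require Import all_boot all_order all_algebra.
From mathcomp Require Import all_classical all_reals all_analysis.
Set Implicit Arguments. Unset Strict Implicit. Unset Printing Implicit Defensive.
Import Order.TTheory GRing.Theory Num.Theory.
Import numFieldNormedType.Exports.
Local Open Scope classical_set_scope.
Local Open Scope ring_scope.

(* Points of R^{m+n} are row vectors p : 'rV[R]_(m+n); the first m coordinates
   are t, the last n coordinates are x. *)
Section Defs.
Variables (R : realType) (m n : nat).
Implicit Types (p w : 'rV[R]_(m + n)) (eps : R).

Definition dotv k (a b : 'rV[R]_k) : R := \sum_(i < k) a 0 i * b 0 i.
Definition sqn k (a : 'rV[R]_k) : R := dotv a a.

Definition tpart p : 'rV[R]_m := lsubmx p.
Definition xpart p : 'rV[R]_n := rsubmx p.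

Definition rr p : R := Num.sqrt (sqn (xpart p)).
Definition tau p : R := Num.sqrt (sqn (tpart p)).
Definition uu p : R := (tau p - rr p) / 2.
Definition vv p : R := (tau p + rr p) / 2.
Definition ff p : R := - (uu p * vv p).
Definition Dom : set 'rV[R]_(m + n) := [set p | 0 < ff p].

Definition rhobar eps p : R := rr p + 2 * eps * ff p.
Definition xi eps p : R := (1 + eps * uu p) * (1 - eps * vv p).

(* The map bar Phi, defined in null coordinates:
   (u,v,omega_x,omega_t) |-> (u/(1+eps u), v/(1-eps v), omega_x, omega_t),
   translated back to Cartesian coordinates via t = (u+v) omega_t,
   x = (v-u) omega_x, omega_t = t/|t|, omega_x = x/|x|.
   (When t = 0 the new t-component u'+v' vanishes as well, and we keep t = 0.) *)
Definition Phibar eps p : 'rV[R]_(m + n) :=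
  let u' := uu p / (1 + eps * uu p) in
  let v' := vv p / (1 - eps * vv p) in
  row_mx (if tau p == 0 then tpart p else ((u' + v') / tau p) *: tpart p)
         (((v' - u') / rr p) *: xpart p).

Definition gmink (p w1 w2 : 'rV[R]_(m + n)) : R :=
  - dotv (tpart w1) (tpart w2) + dotv (xpart w1) (xpart w2).

Definition dtau p w : R :=
  if tau p == 0 then 0 else dotv (tpart p) (tpart w) / tau p.
Definition dr p w : R := dotv (xpart p) (xpart w) / rr p.
Definition du p w : R := (dtau p w - dr p w) / 2.
Definition dv p w : R := (dtau p w + dr p w) / 2.

(* round metric of S^{n-1} pulled back by omega_x = x/|x| *)
Definition gamma_x p (w1 w2 : 'rV[R]_(m + n)) : R :=
  (dotv (xpart w1) (xpart w2) - dr p w1 * dr p w2) / rr p ^+ 2.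
(* tau^2 times the round metric of S^{m-1} pulled back by omega_t = t/|t|
   (this product extends smoothly to t = 0) *)
Definition tau2_gamma_t p (w1 w2 : 'rV[R]_(m + n)) : R :=
  dotv (tpart w1) (tpart w2) - dtau p w1 * dtau p w2.

(* warped metric  gbar = -4 du dv + rhobar^2 gamma_{S^{n-1}} - tau^2 gamma_{S^{m-1}}
   (symmetrized bilinear form) *)
Definition gbar eps p (w1 w2 : 'rV[R]_(m + n)) : R :=
  - 2 * (du p w1 * dv p w2 + dv p w1 * du p w2)
  + rhobar eps p ^+ 2 * gamma_x p w1 w2 - tau2_gamma_t p w1 w2.

End Defs.

(* Main.v *)
Require Import Defs.
From HB Require Import structures.
From mathcomp Require Import all_boot all_order all_algebra.
From mathcomp Require Import all_classical all_reals all_analysis.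
From mathcomp Require Import lra ring.
Set Implicit Arguments. Unset Strict Implicit. Unset Printing Implicit Defensive.
Import Order.TTheory GRing.Theory Num.Theory.
Import numFieldNormedType.Exports.
Local Open Scope classical_set_scope.
Local Open Scope ring_scope.
Section Alg.
Variables (R : realType) (m n : nat).
Local Notation V := 'rV[R]_(m + n).

Lemma dotvC k (a b : 'rV[R]_k) : dotv a b = dotv b a.
Proof. by rewrite /dotv; apply: eq_bigr => i _; rewrite mulrC. Qed.
Lemma dotvDl k (a b c : 'rV[R]_k) : dotv (a + b) c = dotv a c + dotv b c.
Proof. by rewrite /dotv -big_split; apply: eq_bigr => i _; rewrite mxE mulrDl. Qed.
Lemma dotvZl k s (a c : 'rV[R]_k) : dotv (s *: a) c = s * dotv a c.
Proof. by rewrite /dotv mulr_sumr; apply: eq_bigr => i _; rewrite mxE mulrA. Qed.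
Lemma dotvDr k (a b c : 'rV[R]_k) : dotv c (a + b) = dotv c a + dotv c b.
Proof. by rewrite dotvC dotvDl !(dotvC c). Qed.
Lemma dotvZr k s (a c : 'rV[R]_k) : dotv c (s *: a) = s * dotv c a.
Proof. by rewrite dotvC dotvZl dotvC. Qed.
Lemma dotv0l k (c : 'rV[R]_k) : dotv 0 c = 0.
Proof. by rewrite /dotv big1 // => i _; rewrite mxE mul0r. Qed.
Lemma sqn_ge0 k (a : 'rV[R]_k) : 0 <= sqn a.
Proof. by rewrite /sqn /dotv; apply: sumr_ge0 => i _; rewrite -expr2 sqr_ge0. Qed.
Lemma sqn_eq0 k (a : 'rV[R]_k) : sqn a = 0 -> a = 0.
Proof.
move=> h; apply/rowP => i; rewrite mxE.
have hp : forall j, xpredT j -> 0 <= a 0 j * a 0 j by move=> j _; rewrite -expr2 sqr_ge0.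
have /eqP := psumr_eq0P hp h isT (i := i).
by rewrite mulf_eq0 orbb => /eqP.
Qed.
Lemma sqnZ k s (a : 'rV[R]_k) : sqn (s *: a) = s ^+ 2 * sqn a.
Proof. by rewrite /sqn dotvZl dotvZr mulrA -expr2. Qed.
Lemma sqrtZ (s x : R) : 0 <= x -> Num.sqrt (s ^+ 2 * x) = `|s| * Num.sqrt x.
Proof. by move=> hx; rewrite sqrtrM ?sqr_ge0 // sqrtr_sqr. Qed.

Lemma tau_ge0 (p : V) : 0 <= tau p. Proof. exact: sqrtr_ge0. Qed.
Lemma rr_ge0 (p : V) : 0 <= rr p. Proof. exact: sqrtr_ge0. Qed.
Lemma tau_sq (p : V) : tau p ^+ 2 = sqn (tpart p). Proof. by rewrite sqr_sqrtr // sqn_ge0. Qed.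
Lemma rr_sq (p : V) : rr p ^+ 2 = sqn (xpart p). Proof. by rewrite sqr_sqrtr // sqn_ge0. Qed.
Lemma tau0 (p : V) : tau p = 0 -> tpart p = 0.
Proof.
move=> /eqP; rewrite sqrtr_eq0 => h; apply: sqn_eq0; apply/eqP.
by rewrite eq_le h sqn_ge0.
Qed.
Lemma tauE (p : V) : tau p = uu p + vv p. Proof. by rewrite /uu /vv; field. Qed.
Lemma rrE (p : V) : rr p = vv p - uu p. Proof. by rewrite /uu /vv; field. Qed.

Definition cA e (p : V) := ((1 + e * uu p) * (1 - e * vv p))^-1.
Definition cB e (p : V) := (vv p - uu p + 2 * e * uu p * vv p) /
   ((1 + e * uu p) * (1 - e * vv p) * (vv p - uu p)).

Lemma Phibar_eq e (p : V) : 1 + e * uu p != 0 -> 1 - e * vv p != 0 -> rr p != 0 ->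
  Phibar e p = row_mx (cA e p *: tpart p) (cB e p *: xpart p).
Proof.
move=> h1 h2 h3; rewrite /Phibar /cA /cB.
rewrite tauE rrE in h3 *.
case: ifP => [/eqP t0|/negbT t0].
- have tp0 : tpart p = 0 by apply: tau0; rewrite tauE.
  rewrite tp0 scaler0; congr (row_mx _ (_ *: _)).
  move: h1 h2 h3 t0; move: (uu p) (vv p) => u v h1 h2 h3 t0.
  by field; rewrite h3 h1 h2.
- congr (row_mx (_ *: _) (_ *: _)).
  + move: h1 h2 h3 t0; move: (uu p) (vv p) => u v h1 h2 h3 t0.
    by field; rewrite h1 h2 t0.
  + move: h1 h2 h3 t0; move: (uu p) (vv p) => u v h1 h2 h3 t0.
    by field; rewrite h3 h1 h2.
Qed.
Lemma Dom_uv (p : V) : Dom p -> uu p < 0 < vv p.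
Proof.
rewrite /Dom /ff /= => h.
have h1 := tau_ge0 p; have h2 := rr_ge0 p.
rewrite tauE in h1; rewrite rrE in h2.
move: h h1 h2; move: (uu p) (vv p) => u v h h1 h2.
apply/andP; split; nra.
Qed.

Lemma bounds e (p : V) : Dom p -> `|e| * rr p <= 1/4 ->
  [/\ 0 < 1 + e * uu p, 0 < 1 - e * vv p, 0 < vv p - uu p,
      0 < vv p - uu p + 2 * e * uu p * vv p &
      vv p - uu p + 2 * e * uu p * vv p <
        2 * (vv p - uu p) * ((1 + e * uu p) * (1 - e * vv p))].
Proof.
move=> hD he; have /andP[hu hv] := Dom_uv hD.
have h1 := tau_ge0 p; rewrite tauE in h1.
rewrite rrE in he.
have hs : `|e * uu p| <= 1/8.
  rewrite normrM (ltr0_norm hu).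
  have : `|e| * - uu p <= `|e| * ((vv p - uu p)/2).
    by apply: (ler_wpM2l (normr_ge0 e)); lra.
  by rewrite mulrA; lra.
have hw : `|e * vv p| <= 1/4.
  rewrite normrM (gtr0_norm hv).
  have : `|e| * vv p <= `|e| * (vv p - uu p).
    by apply: (ler_wpM2l (normr_ge0 e)); lra.
  lra.
move: hs hw; rewrite !ler_norml => /andP[s1 s2] /andP[w1 w2].
move: hu hv h1 s1 s2 w1 w2.
move: (uu p) (vv p) => u v hu hv h1 s1 s2 w1 w2.
have hs : 0 < 1 + e * u by lra.
have hw : 0 < 1 - e * v by lra.
have hp : 21/32 <= (1 + e * u) * (1 - e * v) by nra.
have h4 : 0 <= (e * u + 1/8) * v by apply: mulr_ge0; lra.
have h5 : 0 <= (e * u + 1/8) * (- u) by apply: mulr_ge0; lra.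
have h6 : 0 <= (v - u) * ((1 + e * u) * (1 - e * v) - 21/32) by apply: mulr_ge0; lra.
split; [lra|lra|lra| nra | nra].
Qed.
Definition good e (p : V) := [/\ 0 < 1 + e * uu p, 0 < 1 - e * vv p, 0 < vv p - uu p
   & 0 < vv p - uu p + 2 * e * uu p * vv p].

Lemma bounds_good e (p : V) : Dom p -> `|e| * rr p <= 1/4 -> good e p.
Proof. by move=> hD he; have [] := bounds hD he. Qed.

Section G.
Variables (e : R) (p : V).
Hypothesis hg : good e p.

Lemma cA_gt0 : 0 < cA e p.
Proof. by case: hg => h1 h2 h3 h4; rewrite /cA invr_gt0 mulr_gt0. Qed.
Lemma cB_gt0 : 0 < cB e p.
Proof. by case: hg => h1 h2 h3 h4; rewrite /cB divr_gt0 // !mulr_gt0. Qed.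
Lemma PhiE : Phibar e p = row_mx (cA e p *: tpart p) (cB e p *: xpart p).
Proof.
case: hg => h1 h2 h3 h4; apply: Phibar_eq; rewrite ?gt_eqF //.
by rewrite rrE.
Qed.
Lemma tpart_Phi : tpart (Phibar e p) = cA e p *: tpart p.
Proof. by rewrite PhiE /tpart row_mxKl. Qed.
Lemma xpart_Phi : xpart (Phibar e p) = cB e p *: xpart p.
Proof. by rewrite PhiE /xpart row_mxKr. Qed.
Lemma tau_Phi : tau (Phibar e p) = cA e p * tau p.
Proof. by rewrite /tau tpart_Phi sqnZ sqrtZ ?sqn_ge0 // gtr0_norm // cA_gt0. Qed.
Lemma rr_Phi : rr (Phibar e p) = cB e p * rr p.
Proof. by rewrite /rr xpart_Phi sqnZ sqrtZ ?sqn_ge0 // gtr0_norm // cB_gt0. Qed.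
Lemma uu_Phi : uu (Phibar e p) = uu p / (1 + e * uu p).
Proof.
have -> : uu (Phibar e p) = (tau (Phibar e p) - rr (Phibar e p)) / 2 by [].
rewrite tau_Phi rr_Phi tauE rrE /cA /cB.
case: hg; move: (uu p) (vv p) => u v h1 h2 h3 h4.
by field; rewrite ?gt_eqF.
Qed.
Lemma vv_Phi : vv (Phibar e p) = vv p / (1 - e * vv p).
Proof.
have -> : vv (Phibar e p) = (tau (Phibar e p) + rr (Phibar e p)) / 2 by [].
rewrite tau_Phi rr_Phi tauE rrE /cA /cB.
case: hg; move: (uu p) (vv p) => u v h1 h2 h3 h4.
by field; rewrite ?gt_eqF.
Qed.
Lemma xi_gt0 : 0 < xi e p.
Proof. by case: hg => h1 h2 h3 h4; rewrite /xi mulr_gt0. Qed.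
Lemma ff_Phi : ff (Phibar e p) = (xi e p)^-1 * ff p.
Proof.
rewrite /ff uu_Phi vv_Phi /xi.
case: hg; move: (uu p) (vv p) => u v h1 h2 h3 h4.
by field; rewrite ?gt_eqF.
Qed.
Lemma rhobar_Phi : rhobar e (Phibar e p) = (xi e p)^-1 * rr p.
Proof.
rewrite /rhobar rr_Phi ff_Phi rrE /cB /ff /xi.
case: hg; move: (uu p) (vv p) => u v h1 h2 h3 h4.
by field; rewrite ?gt_eqF.
Qed.
Lemma tau_Phi' : tau (Phibar e p) = (xi e p)^-1 * tau p.
Proof. by rewrite tau_Phi. Qed.
Lemma Dom_Phi : Dom p -> Dom (Phibar e p).
Proof. by rewrite /Dom /= ff_Phi => h; rewrite mulr_gt0 // invr_gt0 xi_gt0. Qed.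

Lemma Phi_inv : Phibar (- e) (Phibar e p) = p.
Proof.
case: hg => h1 h2 h3 h4.
have hq1 : 1 + - e * uu (Phibar e p) = (1 + e * uu p)^-1.
  by rewrite uu_Phi; move: h1; move: (uu p) => u h1; field; rewrite gt_eqF.
have hq2 : 1 - - e * vv (Phibar e p) = (1 - e * vv p)^-1.
  by rewrite vv_Phi; move: h2; move: (vv p) => v h2; field; rewrite gt_eqF.
rewrite Phibar_eq; first last.
- by rewrite rr_Phi mulf_neq0 ?gt_eqF ?cB_gt0 // rrE.
- by rewrite hq2 invr_neq0 // gt_eqF.
- by rewrite hq1 invr_neq0 // gt_eqF.
rewrite tpart_Phi xpart_Phi !scalerA.
have -> : cA (- e) (Phibar e p) * cA e p = 1.
  rewrite /cA hq1 hq2.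
  move: h1 h2 h3 h4; move: (uu p) (vv p) => u v h1 h2 h3 h4.
  by field; rewrite ?gt_eqF.
have -> : cB (- e) (Phibar e p) * cB e p = 1.
  rewrite /cB hq1 hq2 uu_Phi vv_Phi.
  move: h1 h2 h3 h4; move: (uu p) (vv p) => u v h1 h2 h3 h4.
  have hq : v / (1 - e * v) - u / (1 + e * u) != 0.
    have -> : v / (1 - e * v) - u / (1 + e * u) = (v - u + 2 * e * u * v) / ((1 + e * u) * (1 - e * v)).
      by field; rewrite ?gt_eqF.
    by rewrite gt_eqF // divr_gt0 // mulr_gt0.
  have hq' : v * (1 + e * u) + - u * (1 - e * v) != 0.
    have -> : v * (1 + e * u) + - u * (1 - e * v) = v - u + 2 * e * u * v by ring.
    by rewrite gt_eqF.
  by field; rewrite hq' ?gt_eqF.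
by rewrite !scale1r hsubmxK.
Qed.
End G.
End Alg.
Section Diff.
Variables (R : realType) (m n : nat).
Local Notation V := 'rV[R]_(m + n).

Lemma is_diff_coord (x : V) (j : 'I_(m + n)) :
  is_diff x (fun y : V => y 0 j) (fun w : V => w 0 j).
Proof.
have @f : {linear V -> R}.
  by exists (fun N : V => N 0 j); do 2![eexists]; do ?[constructor];
     rewrite ?mxE// => ? *; rewrite ?mxE//; move=> ?; rewrite !mxE.
have fc : continuous f by exact: coord_continuous.
have -> : (fun y : V => y 0 j) = f by [].
apply: DiffDef; first exact: linear_differentiable.
by rewrite diff_lin.
Qed.

Lemma is_diff_sum (W : normedModType R) k (x : V) (f df : 'I_k -> V -> W) :
  (forall i, is_diff x (f i) (df i)) ->
  is_diff x (fun y => \sum_(i < k) f i y) (fun w => \sum_(i < k) df i w).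
Proof.
elim: k f df => [|k IH] f df H.
  have -> : (fun y => \sum_(i < 0) f i y) = cst 0 by apply/funext => y; rewrite big_ord0.
  have -> : (fun w => \sum_(i < 0) df i w) = 0 by apply/funext => y; rewrite big_ord0.
  exact: is_diff_cst.
have -> : (fun y => \sum_(i < k.+1) f i y) =
   (fun y => \sum_(i < k) f (widen_ord (leqnSn k) i) y) + f ord_max.
  by apply/funext => y; rewrite big_ord_recr.
have H1 := is_diffD (IH (fun i => f (widen_ord (leqnSn k) i)) (fun i => df (widen_ord (leqnSn k) i)) (fun i => H _)) (H ord_max).
apply: (is_diff_eq H1).
by apply/funext => y; rewrite /= big_ord_recr.
Qed.

Lemma is_diffZl (W : normedModType R) (x : V) (k dk : V -> R) (c : W) :
  is_diff x k dk -> is_diff x (fun y => k y *: c) (fun w => dk w *: c).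
Proof.
move=> hk; apply: DiffDef; first exact: differentiableZl.
by rewrite diffZl // diff_val.
Qed.

Lemma is_diff_row k (x : V) (F : V -> 'rV[R]_k) (dF : 'I_k -> V -> R) :
  (forall j, is_diff x (fun y => F y 0 j) (dF j)) ->
  is_diff x F (fun w => \row_j dF j w).
Proof.
move=> H.
have -> : F = (fun y => \sum_(j < k) (fun y => F y 0 j *: (delta_mx 0 j : 'rV[R]_k)) y).
  by apply/funext => y; rewrite {1}[F y]matrix_sum_delta big_ord1.
have H1 := is_diff_sum (fun j => is_diffZl (delta_mx 0 j : 'rV[R]_k) (H j)).
apply: (is_diff_eq H1).
apply/funext => w; rewrite [RHS]matrix_sum_delta big_ord1.
by apply: eq_bigr => j _; rewrite mxE.
Qed.

Lemma is_diffM2 (x : V) (f g df dg : V -> R) :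
  is_diff x f df -> is_diff x g dg ->
  is_diff x (fun y => f y * g y) (fun w => f x * dg w + g x * df w).
Proof.
move=> hf hg; have := is_diffM hf hg; by [].
Qed.

Lemma is_diffD2 (x : V) (f g df dg : V -> R) :
  is_diff x f df -> is_diff x g dg ->
  is_diff x (fun y => f y + g y) (fun w => df w + dg w).
Proof. move=> hf hg; have := is_diffD hf hg; by []. Qed.

Lemma is_diffB2 (x : V) (f g df dg : V -> R) :
  is_diff x f df -> is_diff x g dg ->
  is_diff x (fun y => f y - g y) (fun w => df w - dg w).
Proof. move=> hf hg; have := is_diffB hf hg; by []. Qed.

Lemma is_diffcst (x : V) (c : R) : is_diff x (fun _ => c) (fun _ => 0).
Proof. exact: is_diff_cst. Qed.

Lemma is_diffMl (x : V) (c : R) (f df : V -> R) :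
  is_diff x f df -> is_diff x (fun y => c * f y) (fun w => c * df w).
Proof.
move=> hf; have H1 := is_diffM2 (is_diffcst x c) hf.
apply: (is_diff_eq H1); apply/funext => w; by rewrite mulr0 addr0.
Qed.

Lemma is_diffV2 (x : V) (f df : V -> R) :
  is_diff x f df -> f x != 0 ->
  is_diff x (fun y => (f y)^-1) (fun w => - (f x ^- 2) * df w).
Proof.
move=> hf hx; apply: DiffDef; first exact: differentiableV.
by rewrite diffV // diff_val.
Qed.

Lemma is_diff_sqrt (a : R) : 0 < a ->
  is_diff a (@Num.sqrt R) (fun h => h * (2 * Num.sqrt a)^-1).
Proof.
move=> ha; have H := is_derive1_sqrt ha.
have dv : derivable (@Num.sqrt R) a 1 by exact: ex_derive.
have df : differentiable (@Num.sqrt R) a by apply/derivable1_diffP.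
apply: DiffDef => //.
by rewrite deriv1E // derive1E derive_val.
Qed.

End Diff.
Section Fun.
Variables (R : realType) (m n : nat).
Local Notation V := 'rV[R]_(m + n).
Implicit Types (x y w : V).

Definition sxf y := sqn (xpart y).
Definition stf y := sqn (tpart y).
Definition Dx x w := dotv (xpart x) (xpart w).
Definition Dt x w := dotv (tpart x) (tpart w).

Lemma is_diff_sx x : is_diff x sxf (fun w => 2 * Dx x w).
Proof.
have -> : sxf = (fun y => \sum_(i < n) (fun i y => y 0 (rshift m i) * y 0 (rshift m i)) i y).
  by apply/funext => y; rewrite /sxf /sqn /dotv; apply: eq_bigr => i _; rewrite /xpart !mxE.
have H1 := is_diff_sum (fun i => is_diffM2 (is_diff_coord x (rshift m i)) (is_diff_coord x (rshift m i))).
apply: (is_diff_eq H1); apply/funext => w; rewrite /Dx /dotv mulr_sumr.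
by apply: eq_bigr => i _; rewrite /xpart !mxE; ring.
Qed.

Lemma is_diff_st x : is_diff x stf (fun w => 2 * Dt x w).
Proof.
have -> : stf = (fun y => \sum_(i < m) (fun i y => y 0 (lshift n i) * y 0 (lshift n i)) i y).
  by apply/funext => y; rewrite /stf /sqn /dotv; apply: eq_bigr => i _; rewrite /tpart !mxE.
have H1 := is_diff_sum (fun i => is_diffM2 (is_diff_coord x (lshift n i)) (is_diff_coord x (lshift n i))).
apply: (is_diff_eq H1); apply/funext => w; rewrite /Dt /dotv mulr_sumr.
by apply: eq_bigr => i _; rewrite /tpart !mxE; ring.
Qed.

Lemma ffE y : ff y = 4^-1 * (sxf y - stf y).
Proof. by rewrite /sxf /stf -tau_sq -rr_sq /ff /uu /vv; field. Qed.

Lemma is_diff_ff x : is_diff x (@ff R m n) (fun w => 4^-1 * (2 * Dx x w - 2 * Dt x w)).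
Proof.
have -> : (@ff R m n) = (fun y => 4^-1 * (sxf y - stf y)) by apply/funext => y; rewrite ffE.
exact: is_diffMl (is_diffB2 (is_diff_sx x) (is_diff_st x)).
Qed.

Lemma is_diff_rr x : 0 < sxf x ->
  is_diff x (@rr R m n) (fun w => 2 * Dx x w * (2 * rr x)^-1).
Proof.
move=> hx; have H1 := is_diff_comp (is_diff_sx x) (is_diff_sqrt hx).
have -> : (@rr R m n) = Num.sqrt \o sxf by [].
exact: H1.
Qed.

End Fun.
Section G2.
Variables (R : realType) (m n : nat) (e : R).
Local Notation V := 'rV[R]_(m + n).
Implicit Types (x y w : V).

Definition XI y := 1 - e * rr y + e ^+ 2 * ff y.
Definition aF y := (XI y)^-1.
Definition NF y := rr y - 2 * e * ff y.
Definition bF y := NF y * aF y * (rr y)^-1.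
Definition Gfun y : V := row_mx (aF y *: tpart y) (bF y *: xpart y).

Lemma xiE y : xi e y = XI y.
Proof. by rewrite /xi /XI /ff rrE; ring. Qed.
Lemma cA_aF y : cA e y = aF y.
Proof. by rewrite /cA /aF -xiE. Qed.
Lemma cB_bF y : cB e y = bF y.
Proof.
rewrite /cB /bF /aF /NF -xiE /xi rrE /ff invfM; ring.
Qed.

Definition drr x w := 2 * Dx x w * (2 * rr x)^-1.
Definition dff x w := 4^-1 * (2 * Dx x w - 2 * Dt x w).
Definition dXI x w := 0 - e * drr x w + e ^+ 2 * dff x w.
Definition da x w := - (XI x ^- 2) * dXI x w.
Definition dNF x w := drr x w - 2 * e * dff x w.
Definition db x w := NF x * aF x * (- (rr x ^- 2) * drr x w)
   + (rr x)^-1 * (NF x * da x w + aF x * dNF x w).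

Lemma is_diff_XI x : 0 < sxf x -> is_diff x XI (dXI x).
Proof.
move=> hx.
exact: is_diffD2 (is_diffB2 (is_diffcst x 1) (is_diffMl e (is_diff_rr hx)))
   (is_diffMl (e ^+ 2) (is_diff_ff x)).
Qed.

Lemma is_diff_aF x : 0 < sxf x -> XI x != 0 -> is_diff x aF (da x).
Proof. by move=> hx h; exact: is_diffV2 (is_diff_XI hx) h. Qed.

Lemma is_diff_bF x : 0 < sxf x -> XI x != 0 -> rr x != 0 -> is_diff x bF (db x).
Proof.
move=> hx h hr.
have hN : is_diff x NF (dNF x) := is_diffB2 (is_diff_rr hx) (is_diffMl (2 * e) (is_diff_ff x)).
have H1 := is_diffM2 (is_diffM2 hN (is_diff_aF hx h)) (is_diffV2 (is_diff_rr hx) hr).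
exact: H1.
Qed.

Lemma Gfun_coord y (j : 'I_(m + n)) :
  Gfun y 0 j = (if (j < m)%N then aF y else bF y) * y 0 j.
Proof.
by rewrite /Gfun; case: split_ordP => k ->; rewrite ?row_mxEl ?row_mxEr !mxE.
Qed.

Definition dG x w : V := row_mx (da x w *: tpart x + aF x *: tpart w)
                           (db x w *: xpart x + bF x *: xpart w).

Lemma is_diff_G x : 0 < sxf x -> XI x != 0 -> rr x != 0 -> is_diff x Gfun (dG x).
Proof.
move=> hx h hr.
have H : forall j : 'I_(m + n), is_diff x (fun y => Gfun y 0 j)
   (fun w => (if (j < m)%N then aF x else bF x) * w 0 j +
             x 0 j * (if (j < m)%N then da x w else db x w)).
  move=> j; have -> : (fun y => Gfun y 0 j) =
      (fun y => (if (j < m)%N then aF y else bF y) * y 0 j).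
    by apply/funext => y; rewrite Gfun_coord.
  case: (j < m)%N.
  - exact: is_diffM2 (is_diff_aF hx h) (is_diff_coord x j).
  - exact: is_diffM2 (is_diff_bF hx h hr) (is_diff_coord x j).
have H1 := is_diff_row H.
apply: (is_diff_eq H1); apply/funext => w; apply/rowP => j; rewrite mxE /dG.
by case: split_ordP => k ->; rewrite ?row_mxEl ?row_mxEr !mxE /tpart /xpart ?mxE; ring.
Qed.

End G2.
Section Near.
Variables (R : realType) (V W : normedModType R).

Lemma is_diff_near (f g dg : V -> W) (x : V) :
  (\forall y \near x, f y = g y) -> is_diff x g dg -> is_diff x f dg.
Proof.
move=> fg hg.
have dgx : differentiable g x by [].
have fx : f x = g x := nbhs_singleton fg.
have key : f \o shift x = cst (f x) + 'd g x +o_ 0 id.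
  apply/eqaddoP => eps heps.
  have /eqaddoP H := diff_locally dgx.
  have fg0 : \forall h \near 0, f (h + x) = g (h + x).
    by move: fg; rewrite (near_shift 0) subr0.
  apply: filterS2 fg0 (H eps heps) => h E1 E2.
  have -> : (f \o shift x - (cst (f x) + 'd g x)) h = (g \o shift x - (cst (g x) + 'd g x)) h.
    by change (f (h + x) - (f x + 'd g x h) = g (h + x) - (g x + 'd g x h)); rewrite E1 fx.
  exact: E2.
have hd : 'd f x = 'd g x :> (V -> W).
  by apply: diff_unique => //; exact: diff_continuous.
apply: DiffDef.
  by apply/diff_locallyP; rewrite hd; split => //; exact: diff_continuous.
by rewrite hd diff_val.
Qed.
End Near.
Section Metric.
Variables (R : realType) (m n : nat).
Local Notation V := 'rV[R]_(m + n).

Lemma dtauE (y w : V) : dtau y w = dotv (tpart y) (tpart w) / tau y.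
Proof. by rewrite /dtau; case: eqP => [->|//]; rewrite invr0 mulr0. Qed.

Lemma dot_exp k (a b c d : R) (x y z : 'rV[R]_k) :
  dotv (a *: x + b *: y) (c *: x + d *: z) =
  a * c * sqn x + a * d * dotv x z + b * c * dotv x y + b * d * dotv y z.
Proof.
rewrite !dotvDl !dotvDr !dotvZl !dotvZr /sqn (dotvC y x); ring.
Qed.

Lemma metric e (p w1 w2 : V) : Dom p -> good e p ->
  gbar e (Phibar e p) (dG e p w1) (dG e p w2) = (xi e p) ^- 2 * gmink p w1 w2.
Proof.
move=> hD hg.
have hA := cA_gt0 hg; have hB := cB_gt0 hg.
rewrite cA_aF in hA; rewrite cB_bF in hB.
have tq : tpart (Phibar e p) = aF e p *: tpart p by rewrite tpart_Phi // cA_aF.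
have xq : xpart (Phibar e p) = bF e p *: xpart p by rewrite xpart_Phi // cB_bF.
have tauq : tau (Phibar e p) = aF e p * tau p by rewrite tau_Phi // cA_aF.
have rrq : rr (Phibar e p) = bF e p * rr p by rewrite rr_Phi // cB_bF.
have tW w : tpart (dG e p w) = da e p w *: tpart p + aF e p *: tpart w.
  by rewrite /dG /tpart row_mxKl.
have xW w : xpart (dG e p w) = db e p w *: xpart p + bF e p *: xpart w.
  by rewrite /dG /xpart row_mxKr.
have hr : 0 < rr p by case: hg => h1 h2 h3 h4; rewrite rrE.
have dtq w : dtau (Phibar e p) (dG e p w) = da e p w * tau p + aF e p * (Dt p w / tau p).
  have [t0|t0] := eqVneq (tau p) 0.
    by rewrite dtauE tauq t0 !(mulr0, invr0, mul0r, addr0).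
  rewrite dtauE tq tW tauq dotvDr !dotvZl !dotvZr -/(sqn (tpart p)) -tau_sq -/(Dt p w).
  by field; rewrite t0 gt_eqF.
have drq w : dr (Phibar e p) (dG e p w) = db e p w * rr p + bF e p * (Dx p w / rr p).
  rewrite /dr xq xW rrq dotvDr !dotvZl !dotvZr -/(sqn (xpart p)) -rr_sq -/(Dx p w).
  by field; rewrite !gt_eqF.
rewrite /gbar /du /dv !dtq !drq rhobar_Phi // /gamma_x /tau2_gamma_t !dtq !drq.
rewrite !tW !xW !dot_exp rrq /gmink.
rewrite -/(Dt p w1) -/(Dt p w2) -/(Dx p w1) -/(Dx p w2) -tau_sq -rr_sq.
rewrite /db /dNF /da /dXI /drr /dff /bF /NF /aF /XI /xi /ff /uu /vv.
case: hg => h1 h2 h3 h4; rewrite /uu /vv in h1 h2 h3 h4.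
have [t0|t0] := eqVneq (tau p) 0.
  have tp0 := tau0 t0.
  have -> : Dt p w1 = 0 by rewrite /Dt tp0 dotv0l.
  have -> : Dt p w2 = 0 by rewrite /Dt tp0 dotv0l.
  rewrite t0 !mul0r.
  rewrite t0 in h1 h2 h3 h4.
  move: h1 h2 h3 h4 hr.
  move: (rr p) (Dx p w1) (Dx p w2) (dotv (tpart w1) (tpart w2)) (dotv (xpart w1) (xpart w2)).
  move=> r X1 X2 T12 X12 h1 h2 h3 h4 hr.
  have P1 := mulr_gt0 h1 h2.
  by field; rewrite (gt_eqF hr) !gt_eqF //; nra.
move: h1 h2 h3 h4 hr t0.
move: (tau p) (rr p) (Dt p w1) (Dt p w2) (Dx p w1) (Dx p w2) (dotv (tpart w1) (tpart w2)) (dotv (xpart w1) (xpart w2)).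
move=> t r T1 T2 X1 X2 T12 X12 h1 h2 h3 h4 hr t0.
have P1 := mulr_gt0 h1 h2.
by field; rewrite t0 (gt_eqF hr) !gt_eqF //; nra.
Qed.
End Metric.
Section NearV.
Variables (R : realType) (k : nat).
Local Notation V := 'rV[R]_k.
Lemma nearS (P Q : V -> Prop) (p : V) : (forall y, P y -> Q y) ->
  (\forall y \near p, P y) -> \forall y \near p, Q y.
Proof. move=> H; apply: (@filterS _ _ (@nbhs_filter _ p)) => y; exact: H. Qed.
Lemma nearS2 (P Q S : V -> Prop) (p : V) : (forall y, P y -> Q y -> S y) ->
  (\forall y \near p, P y) -> (\forall y \near p, Q y) -> \forall y \near p, S y.
Proof. move=> H; apply: (@filterS2 _ _ (@nbhs_filter _ p)); exact: H. Qed.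
Lemma nearT (Q : V -> Prop) (p : V) : (forall y, Q y) -> \forall y \near p, Q y.
Proof. move=> H; apply: (@filterS _ _ (@nbhs_filter _ p) setT) => [y _|]; [exact: H | exact: (@filterT _ _ (@nbhs_filter _ p))]. Qed.
Lemma near_gt (f : V -> R) (p : V) (z : R) : {for p, continuous f} -> z < f p ->
  \forall y \near p, z < f y.
Proof. move=> c h; exact: (@cvgr_gt _ _ _ (@nbhs_filter _ p) f (f p) c z h). Qed.
Lemma near_lt (f : V -> R) (p : V) (z : R) : {for p, continuous f} -> f p < z ->
  \forall y \near p, f y < z.
Proof. move=> c h; exact: (@cvgr_lt _ _ _ (@nbhs_filter _ p) f (f p) c z h). Qed.
End NearV.

Section Final.
Variables (R : realType) (m n : nat).
Local Notation V := 'rV[R]_(m + n).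

Lemma rr_Phi_lt (e : R) (p : V) : Dom p -> `|e| * rr p <= 1/4 -> rr (Phibar e p) < 2 * rr p.
Proof.
move=> hD he; have hg := bounds_good hD he.
have [h1 h2 h3 h4 h5] := bounds hD he.
rewrite rr_Phi // /cB rrE.
have -> : (vv p - uu p + 2 * e * uu p * vv p) / ((1 + e * uu p) * (1 - e * vv p) * (vv p - uu p)) * (vv p - uu p)
   = (vv p - uu p + 2 * e * uu p * vv p) / ((1 + e * uu p) * (1 - e * vv p)).
  by field; rewrite !gt_eqF.
by rewrite ltr_pdivrMr ?mulr_gt0.
Qed.

Lemma cont_ff (p : V) : {for p, continuous (@ff R m n)}.
Proof. by case: (is_diff_ff p) => hd _; exact: differentiable_continuous. Qed.

Lemma cont_rr (p : V) : 0 < rr p -> {for p, continuous (@rr R m n)}.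
Proof.
move=> hr; have hx : 0 < sxf p by rewrite /sxf -rr_sq exprn_gt0.
by case: (is_diff_rr hx) => hd _; exact: differentiable_continuous.
Qed.

Lemma Dom_rr (p : V) : Dom p -> 0 < rr p.
Proof. by move=> /Dom_uv /andP[hu hv]; rewrite rrE; lra. Qed.

Lemma near_good (e : R) (p : V) : Dom p -> `|e| * rr p < 1/4 -> \forall y \near p, Dom y /\ `|e| * rr y <= 1/4.
Proof.
move=> hD he.
have hD0 : 0 < ff p by exact: hD.
have F1 := cvgr_gt _ (cont_ff (p:=p)) 0 hD0.
have F1b : \forall y \near p, 0 < ff y by apply: F1; first [exact: nbhs_pfilter | exact: topology_structure.nbhs_filter | apply: filter_filter'; exact: nbhs_pfilter].
have F2 : \forall y \near p, `|e| * rr y <= 1/4.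
  have [->|e0] := eqVneq e 0.
    by apply: nearT => y; rewrite normr0 mul0r.
  have ep : 0 < `|e| by rewrite normr_gt0.
  have hz : rr p < (4 * `|e|)^-1.
    by rewrite -[(4 * `|e|)^-1]div1r ltr_pdivlMr ?mulr_gt0 //; lra.
  have F3 := cvgr_lt _ (cont_rr (Dom_rr hD)) _ hz.
  have F3b : \forall y \near p, rr y < (4 * `|e|)^-1 by apply: F3; first [exact: nbhs_pfilter | exact: topology_structure.nbhs_filter | apply: filter_filter'; exact: nbhs_pfilter].
  move: F3b; apply: nearS => y hy.
  have E : `|e| * (4 * `|e|)^-1 = 1/4 by field; rewrite gt_eqF.
  have : `|e| * rr y <= `|e| * (4 * `|e|)^-1 by apply: (ler_wpM2l (normr_ge0 e)); exact: ltW.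
  by rewrite E.
exact: (nearS2 (fun y a b => conj a b) F1b F2).
Qed.

Lemma diff_Phi (e : R) (p : V) : Dom p -> `|e| * rr p < 1/4 -> is_diff p (Phibar e) (dG e p).
Proof.
move=> hD he.
have hg : good e p by apply: bounds_good => //; exact: ltW.
apply: (@is_diff_near _ _ _ _ (Gfun e)).
  move: (near_good hD he); apply: nearS => y [hy1 hy2].
  by rewrite PhiE ?cA_aF ?cB_bF //; exact: bounds_good.
have hr := Dom_rr hD.
apply: is_diff_G.
- by rewrite /sxf -rr_sq exprn_gt0.
- by rewrite -xiE gt_eqF // xi_gt0.
- by rewrite gt_eqF.
Qed.

End Final.
Theorem proposition3p8 (R : realType) (m n : nat) :
  exists c : R, 0 < c /\
  forall (Rad eps : R), 0 < Rad -> `|eps| <= c / Rad ->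
  let S := [set p : 'rV[R]_(m + n) | Dom p /\ rr p < Rad] in
  (forall p, S p -> Dom (Phibar eps p)) /\
  (forall p, S p -> tau (Phibar eps p) = (xi eps p)^-1 * tau p) /\
  (forall p, S p -> ff (Phibar eps p) = (xi eps p)^-1 * ff p) /\
  (forall p, S p -> rhobar eps (Phibar eps p) = (xi eps p)^-1 * rr p) /\
  (forall p q, S p -> S q -> Phibar eps p = Phibar eps q -> p = q) /\
  open (Phibar eps @` S) /\
  (forall p, S p -> differentiable (Phibar eps) p) /\
  (forall p w1 w2, S p ->
     gbar eps (Phibar eps p) ('d (Phibar eps) p w1) ('d (Phibar eps) p w2)
     = (xi eps p) ^- 2 * gmink p w1 w2).
Proof.
exists (1/8); split; first by lra.
move=> Rad eps hR he S.
have small : forall r : R, 0 <= r -> r < 2 * Rad -> `|eps| * r < 1/4.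
  move=> r r0 rR.
  have h1 : `|eps| * r <= 1/8/Rad * r by apply: (ler_wpM2r r0).
  have h2 : 1/8/Rad * r < 1/4 by rewrite mulrAC ltr_pdivrMr //; lra.
  lra.
have small1 : forall p, S p -> `|eps| * rr p < 1/4.
  by move=> p [hD hr]; apply: small; [exact: rr_ge0 | lra].
have gp : forall p, S p -> good eps p.
  by move=> p hp; apply: bounds_good; [case: hp | exact: ltW (small1 p hp)].
split; first by move=> p hp; apply: Dom_Phi (gp p hp) _; case: hp.
split; first by move=> p hp; apply: tau_Phi' (gp p hp).
split; first by move=> p hp; apply: ff_Phi (gp p hp).
split; first by move=> p hp; apply: rhobar_Phi (gp p hp).
split.
  move=> p q hp hq E.
  by rewrite -(Phi_inv (gp p hp)) E (Phi_inv (gp q hq)).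
split.
  pose U := [set q : 'rV[R]_(m + n) | Dom q /\ rr q < 2 * Rad /\
              (Dom (Phibar (- eps) q) /\ rr (Phibar (- eps) q) < Rad)].
  have smallN : forall q, U q -> `|- eps| * rr q < 1/4.
    by move=> q [hD [hr _]]; rewrite normrN; apply: small => //; exact: rr_ge0.
  have -> : Phibar eps @` S = U.
    apply/seteqP; split => q.
    - case=> p hp <-; have hg := gp p hp; case: hp => hD hr.
      split; first exact: Dom_Phi.
      split; first by apply: (lt_trans (rr_Phi_lt hD (ltW (small1 p (conj hD hr))))); lra.
      by rewrite Phi_inv.
    - move=> hU; have hU' := hU; case: hU' => hD [hr [hD' hr']].
      exists (Phibar (- eps) q) => //.
      have hg : good (- eps) q by apply: bounds_good => //; exact: ltW (smallN q hU).
      by have := Phi_inv hg; rewrite opprK.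
  rewrite openE => q hU; have hU' := hU; case: hU' => hD [hr [hD' hr']].
  rewrite /interior /=.
  have dq : differentiable (Phibar (- eps)) q by case: (diff_Phi hD (smallN q hU)).
  have cq := differentiable_continuous dq.
  have c3 := continuous_comp cq (cont_ff (p := Phibar (- eps) q)).
  have c4 := continuous_comp cq (cont_rr (Dom_rr hD')).
  have F1 := near_gt (cont_ff (p := q)) hD.
  have F2 := near_lt (cont_rr (Dom_rr hD)) hr.
  have F3 := near_gt c3 hD'.
  have F4 := near_lt c4 hr'.
  have F12 := nearS2 (fun y (a : 0 < ff y) (b : rr y < 2 * Rad) => conj a b) F1 F2.
  have F34 := nearS2 (fun y (a : 0 < ((@ff R m n) \o Phibar (- eps)) y) (b : ((@rr R m n) \o Phibar (- eps)) y < Rad) => conj a b) F3 F4.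
  move: (nearS2 (fun y (a : 0 < ff y /\ rr y < 2 * Rad)
     (b : 0 < ((@ff R m n) \o Phibar (- eps)) y /\ ((@rr R m n) \o Phibar (- eps)) y < Rad) => conj a b) F12 F34).
  by apply: nearS => y [[a b] [c d]].
split.
  move=> p hp; have [hD _] := hp.
  by case: (diff_Phi hD (small1 p hp)).
move=> p w1 w2 hp; have [hD _] := hp.
case: (diff_Phi hD (small1 p hp)) => _ ->.
exact: metric (gp p hp).
Qed.
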